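(* Let $X$ be a Baire space and let $Y$ be a first countable, hereditarily Baire $R_0$-space. Then $X\times Y$ is a Baire space.
   Context: A topological space is a Baire space if every countable intersection of dense open subsets is dense. A space is hereditarily Baire if every nonempty closed subspace is a Baire space. A space is $R_0$ if every open set contains the closure of each of its points. *)

(* Defs.v *)
Definition set (T : Type) := T -> Prop.

(* [op] is a topology on T: contains the whole space (and hence, via empty unions,
   the empty set), closed under binary intersections and arbitrary unions. *)
Definition is_topology {T : Type} (op : set T -> Prop) : Prop :=
  op (fun _ => True) /\
  (forall U V, op U -> op V -> op (fun x => U x /\ V x)) /\
  (forall F : set T -> Prop, (forall U, F U -> op U) ->
     op (fun x => exists U, F U /\ U x)).

Definition closed {T : Type} (op : set T -> Prop) (C : set T) : Prop :=
  op (fun x => ~ C x).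

Definition dense {T : Type} (op : set T -> Prop) (D : set T) : Prop :=
  forall U, op U -> (exists x, U x) -> exists x, U x /\ D x.

Definition baire {T : Type} (op : set T -> Prop) : Prop :=
  forall D : nat -> set T, (forall n, op (D n) /\ dense op (D n)) ->
    dense op (fun x => forall n, D n x).

Definition subspace_open {T : Type} (op : set T -> Prop) (C : set T)
  (W : set {x : T | C x}) : Prop :=
  exists U, op U /\ forall z : {x : T | C x}, W z <-> U (proj1_sig z).

Definition hereditarily_baire {T : Type} (op : set T -> Prop) : Prop :=
  forall C : set T, closed op C -> (exists x, C x) -> baire (subspace_open op C).

Definition first_countable {T : Type} (op : set T -> Prop) : Prop :=
  forall x : T, exists B : nat -> set T,
    (forall n, op (B n) /\ B n x) /\
    (forall U, op U -> U x -> exists n, forall y, B n y -> U y).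

(* Closure of the singleton {x}: y is in it iff every open nbhd of y contains x. *)
Definition in_closure_pt {T : Type} (op : set T -> Prop) (x y : T) : Prop :=
  forall V, op V -> V y -> V x.

Definition R0_space {T : Type} (op : set T -> Prop) : Prop :=
  forall U x, op U -> U x -> forall y, in_closure_pt op x y -> U y.

Definition prod_open {X Y : Type} (opX : set X -> Prop) (opY : set Y -> Prop)
  (W : set (X * Y)) : Prop :=
  forall p, W p -> exists U V, opX U /\ opY V /\ U (fst p) /\ V (snd p) /\
    forall q, U (fst q) -> V (snd q) -> W q.

(* Main.v *)
Require Import Defs.
From mathcomp Require classical_sets.
From Stdlib Require Import Classical FunctionalExtensionality PropExtensionality ClassicalEpsilon Arith Lia Cantor.
Lemma zorn_sets (T:Type) (P : (T -> Prop) -> Prop) :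
  (forall F : (T->Prop)->Prop, (forall A, F A -> P A) ->
     (forall A B, F A -> F B -> (forall x, A x -> B x) \/ (forall x, B x -> A x)) ->
     P (fun x => exists A, F A /\ A x)) ->
  exists A, P A /\ forall B, (forall x, A x -> B x) -> P B -> forall x, B x -> A x.
Proof.
intros H.
destruct (@classical_sets.Zorn_bigcup T P) as [A [PA HA]].
- intros F FP tot. unfold classical_sets.bigcup.
  specialize (H F FP tot).
  match goal with |- P ?Q => replace Q with (fun x => exists A, F A /\ A x) end; [exact H|].
  apply functional_extensionality; intro x; apply propositional_extensionality; split.
  + intros [A0 [FA Ax]]; exists A0; auto.
  + intros [A0 FA Ax]; exists A0; auto.
- exists A; split; [exact PA|]. intros B AB PB x Bx.
  apply NNPP; intro nA. apply (HA B); [|exact PB].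
  split; [exact AB|]. intro BA; apply nA; apply BA; exact Bx.
Qed.

Lemma open_local {T : Type} (op : set T -> Prop) (t : is_topology op) (A : set T) :
  (forall x, A x -> exists V, op V /\ V x /\ forall y, V y -> A y) -> op A.
Proof.
intros H. destruct t as [_ [_ tU]].
specialize (tU (fun V => op V /\ forall y, V y -> A y) (fun U HU => proj1 HU)).
match goal with H : op ?Q |- _ => replace A with Q; [exact H|] end.
apply functional_extensionality; intro x; apply propositional_extensionality; split.
- intros [U [[_ HU] Ux]]; auto.
- intros Ax. destruct (H x Ax) as [V [oV [Vx VA]]]. exists V; auto.
Qed.

Lemma open_inter {T : Type} (op : set T -> Prop) (t : is_topology op) U V :
  op U -> op V -> op (fun x => U x /\ V x).
Proof. destruct t as [_ [tI _]]; auto. Qed.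

Section Ox.
Variables (X St : Type) (opX : set X -> Prop) (tX : is_topology opX) (hX : baire opX)
  (O : St -> set X) (step : nat -> St -> St -> Prop) (s0 : St)
  (Hs0o : opX (O s0)) (Hs0n : exists x, O s0 x)
  (Hstep : forall L s G, opX G -> (exists x, G x) -> (forall x, G x -> O s x) ->
      exists s', step L s s' /\ opX (O s') /\ (exists x, O s' x) /\ (forall x, O s' x -> G x)).

Definition good L s t := step L s t /\ opX (O t) /\ (exists x, O t x) /\ (forall x, O t x -> O s x).

Definition famP L s (A : St -> Prop) :=
  (forall t, A t -> good L s t) /\
  (forall t t', A t -> A t' -> t <> t' -> forall x, O t x -> O t' x -> False).

Definition chP L s A := famP L s A /\
  (opX (O s) -> forall G, opX G -> (exists x, G x /\ O s x) -> exists t, A t /\ exists x, G x /\ O t x).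

Lemma ch_ex L s : exists A, chP L s A.
Proof.
destruct (@zorn_sets St (famP L s)) as [A [PA HA]].
- intros F FP tot. split.
  + intros t [A [FA At]]. exact (proj1 (FP A FA) t At).
  + intros t t' [A [FA At]] [A' [FA' At']] ne x Ox O'x.
    destruct (tot A A' FA FA') as [h|h].
    * exact (proj2 (FP A' FA') t t' (h t At) At' ne x Ox O'x).
    * exact (proj2 (FP A FA) t t' At (h t' At') ne x Ox O'x).
- exists A. split; [exact PA|]. intros oS G oG [g [Gg Sg]].
  apply NNPP; intro Hn.
  destruct (Hstep L s (fun x => G x /\ O s x)) as [t [st [ot [net sub]]]].
  + apply open_inter; auto.
  + exists g; auto.
  + intros x [_ h]; exact h.
  + assert (At : forall u, A u \/ u = t -> A u).
    { apply (HA (fun u => A u \/ u = t)).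
      - intros u Au; auto.
      - split.
        + intros u [Au| ->]; [exact (proj1 PA u Au)|].
          split; [exact st|]. split; [exact ot|]. split; [exact net|].
          intros x Ox; exact (proj2 (sub x Ox)).
        + intros u u' [Au| ->] [Au'| ->] ne x O1 O2.
          * exact (proj2 PA u u' Au Au' ne x O1 O2).
          * apply Hn. exists u; split; [exact Au|]. exists x; split; [exact (proj1 (sub x O2))|exact O1].
          * apply Hn. exists u'; split; [exact Au'|]. exists x; split; [exact (proj1 (sub x O1))|exact O2].
          * apply ne; reflexivity. }
    apply Hn. exists t. split; [apply At; right; reflexivity|].
    destruct net as [x Ox]. exists x. split; [exact (proj1 (sub x Ox))|exact Ox].
Qed.

Definition Ch L s : St -> Prop := proj1_sig (constructive_indefinite_description _ (ch_ex L s)).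
Lemma Ch_spec L s : chP L s (Ch L s).
Proof. unfold Ch. exact (proj2_sig (constructive_indefinite_description _ (ch_ex L s))). Qed.

Fixpoint Lev (L : nat) : St -> Prop :=
  match L with
  | 0 => fun t => t = s0
  | S L' => fun t => exists p, Lev L' p /\ Ch L' p t
  end.

Lemma Lev_a L t : Lev L t -> opX (O t) /\ (exists x, O t x) /\ (forall x, O t x -> O s0 x).
Proof.
revert t; induction L as [|L IH]; intros t H.
- simpl in H; subst; auto.
- destruct H as [p [Lp Cp]].
  destruct (proj1 (proj1 (Ch_spec L p)) t Cp) as [_ [ot [net sub]]].
  destruct (IH p Lp) as [_ [_ sub']]. auto.
Qed.

Lemma Lev_b L t t' : Lev L t -> Lev L t' -> t <> t' -> forall x, O t x -> O t' x -> False.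
Proof.
revert t t'; induction L as [|L IH]; intros t t' H H' ne x Ox O'x.
- simpl in *; subst; auto.
- destruct H as [p [Lp Cp]]. destruct H' as [p' [Lp' Cp']].
  destruct (proj1 (proj1 (Ch_spec L p)) t Cp) as [_ [_ [_ sub]]].
  destruct (proj1 (proj1 (Ch_spec L p')) t' Cp') as [_ [_ [_ sub']]].
  destruct (classic (p = p')) as [e|e].
  + subst p'. exact (proj2 (proj1 (Ch_spec L p)) t t' Cp Cp' ne x Ox O'x).
  + exact (IH p p' Lp Lp' e x (sub x Ox) (sub' x O'x)).
Qed.

Lemma Lev_c L G : opX G -> (exists x, G x /\ O s0 x) -> exists t, Lev L t /\ exists x, G x /\ O t x.
Proof.
intros oG; induction L as [|L IH]; intros Hn.
- exists s0; split; [reflexivity|exact Hn].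
- destruct (IH Hn) as [p [Lp Hp]].
  destruct (proj2 (Ch_spec L p) (proj1 (Lev_a L p Lp)) G oG Hp) as [t [Ct Ht]].
  exists t; split; [exists p; auto|exact Ht].
Qed.

Lemma oxtoby : exists (x : X) (sq : nat -> St), sq 0 = s0 /\
  (forall L, step L (sq L) (sq (S L))) /\ forall L, O (sq L) x.
Proof.
set (Ext := fun x => exists V, opX V /\ (forall y, V y -> ~ O s0 y) /\ V x).
set (Dn := fun L x => (exists t, Lev L t /\ O t x) \/ Ext x).
assert (HD : forall L, opX (Dn L) /\ dense opX (Dn L)).
{ intro L. split.
  - apply open_local; [exact tX|]. intros x [[t [Lt Ot]]|[V [oV [dV Vx]]]].
    + exists (O t). split; [exact (proj1 (Lev_a L t Lt))|]. split; [exact Ot|].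
      intros y Oy. left. exists t; auto.
    + exists V. split; [exact oV|]. split; [exact Vx|]. intros y Vy. right. exists V; auto.
  - intros G oG [g Gg]. destruct (classic (exists x, G x /\ O s0 x)) as [h|h].
    + destruct (Lev_c L G oG h) as [t [Lt [x [Gx Ox]]]]. exists x; split; [exact Gx|].
      left; exists t; auto.
    + exists g; split; [exact Gg|]. right; exists G; split; [exact oG|]. split; [|exact Gg].
      intros y Gy Oy; apply h; exists y; auto. }
destruct (hX Dn HD (O s0) Hs0o Hs0n) as [x [Ox Hx]].
assert (HL : forall L, exists t, Lev L t /\ O t x).
{ intro L; destruct (Hx L) as [h|[V [oV [dV Vx]]]]; auto. exfalso; exact (dV x Vx Ox). }
set (sq := fun L => proj1_sig (constructive_indefinite_description _ (HL L))).
assert (Hsq : forall L, Lev L (sq L) /\ O (sq L) x).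
{ intro L; unfold sq; exact (proj2_sig (constructive_indefinite_description _ (HL L))). }
exists x, sq. split; [exact (proj1 (Hsq 0))|]. split; [|intro L; exact (proj2 (Hsq L))].
intro L. destruct (Hsq (S L)) as [[p [Lp Cp]] Ox'].
destruct (proj1 (proj1 (Ch_spec L p)) _ Cp) as [stp [_ [_ sub]]].
destruct (classic (p = sq L)) as [e|e]; [subst p; exact stp|].
exfalso. exact (Lev_b L p (sq L) Lp (proj1 (Hsq L)) e x (sub x Ox') (proj2 (Hsq L))).
Qed.
End Ox.

Theorem corollary3p3 (X Y : Type) (opX : set X -> Prop) (opY : set Y -> Prop)
  (tX : is_topology opX) (tY : is_topology opY)
  (hX : baire opX)
  (hY1 : first_countable opY) (hY2 : hereditarily_baire opY) (hY3 : R0_space opY) :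
  baire (prod_open opX opY).
Proof.
intros D HD W HW [p Wp].
destruct (HW p Wp) as [U0 [V0 [hU0 [hV0 [hU0p [hV0p hsub]]]]]].
set (Bs := fun y => proj1_sig (constructive_indefinite_description _ (hY1 y))).
assert (HB : forall y, (forall n, opY (Bs y n) /\ Bs y n y) /\
    (forall U, opY U -> U y -> exists n, forall z, Bs y n z -> U z)).
{ intro y; unfold Bs; exact (proj2_sig (constructive_indefinite_description _ (hY1 y))). }
set (kk := fun L => fst (Cantor.of_nat L)).
set (nn := fun L => fst (Cantor.of_nat (snd (Cantor.of_nat L)))).
set (mm := fun L => snd (Cantor.of_nat (snd (Cantor.of_nat L)))).
set (step := fun L (s s' : (set X * (nat -> Y))%type) =>
  (forall j, j <= L -> snd s' j = snd s j) /\
  Bs (snd s (kk L)) (mm L) (snd s' (S L)) /\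
  forall x, fst s' x -> D (nn L) (x, snd s' (S L))).
destruct (@oxtoby X (set X * (nat -> Y))%type opX tX hX fst step (U0, fun _ => snd p))
  as [x [sq [sq0 [sqs sqx]]]].
- exact hU0.
- exists (fst p); exact hU0p.
- intros L s G oG [g Gg] sub.
  set (yk := snd s (kk L)).
  set (R := fun q : X * Y => G (fst q) /\ Bs yk (mm L) (snd q)).
  assert (oR : prod_open opX opY R).
  { intros q Rq. exists G, (Bs yk (mm L)). split; [exact oG|]. split; [exact (proj1 (proj1 (HB yk) (mm L)))|].
    split; [exact (proj1 Rq)|]. split; [exact (proj2 Rq)|]. intros q' a b; split; auto. }
  destruct (proj2 (HD (nn L)) R oR) as [[a b] [[Ga Bb] Dab]].
  { exists (g, yk). split; [exact Gg|exact (proj2 (proj1 (HB yk) (mm L)))]. }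
  destruct (proj1 (HD (nn L)) (a, b) Dab) as [U1 [V1 [oU1 [oV1 [U1a [V1b h1]]]]]].
  exists (fun x => G x /\ U1 x, fun j => if Nat.eqb j (S L) then b else snd s j).
  split; [unfold step; simpl; rewrite Nat.eqb_refl; split; [|split]|simpl; split; [|split]].
  + intros j hj. destruct (Nat.eqb j (S L)) eqn:E; [apply Nat.eqb_eq in E; lia|reflexivity].
  + exact Bb.
  + intros x' [_ U1x]. apply (h1 (x', b)); simpl; auto.
  + apply open_inter; auto.
  + exists a; auto.
  + intros x' [Gx _]; exact Gx.
- set (f := fun L => snd (sq L)). set (pts := fun j => f j j).
  assert (agree : forall L j, j <= L -> f L j = pts j).
  { induction L as [|L IH]; intros j hj.
    - assert (j = 0) by lia; subst; reflexivity.
    - destruct (Nat.eq_dec j (S L)) as [->|ne]; [reflexivity|].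
      unfold f. rewrite (proj1 (sqs L) j ltac:(lia)). apply IH; lia. }
  set (Ext := fun y => exists V, opY V /\ V y /\ forall j, ~ V (pts j)).
  set (F := fun y => ~ Ext y).
  assert (cF : closed opY F).
  { unfold closed. apply open_local; [exact tY|]. intros y hy. unfold F in hy. apply NNPP in hy.
    destruct hy as [V [oV [Vy hV]]]. exists V; split; [exact oV|]; split; [exact Vy|].
    intros z Vz Fz. apply Fz. exists V; auto. }
  assert (Fpts : forall j, F (pts j)).
  { intros j [V [oV [Vy hV]]]. exact (hV j Vy). }
  pose proof (hY2 F cF (ex_intro _ (pts 0) (Fpts 0))) as BF.
  set (DD := fun n (z : {y | F y}) => D n (x, proj1_sig z)).
  assert (HDD : forall n, subspace_open opY F (DD n) /\ dense (subspace_open opY F) (DD n)).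
  { intro n; split.
    - exists (fun y => D n (x, y)). split.
      + apply open_local; [exact tY|]. intros y hxy.
        destruct (proj1 (HD n) (x,y) hxy) as [U1 [V1 [_ [oV1 [U1x [V1y h1]]]]]].
        exists V1; split; [exact oV1|]; split; [exact V1y|]. intros z Vz. apply (h1 (x,z)); simpl; auto.
      + intros z; unfold DD; tauto.
    - intros W' [U' [oU' hU']] [z0 Wz0].
      pose proof (proj1 (hU' z0) Wz0) as Uz0.
      destruct (classic (exists k, U' (pts k))) as [[k Uk]|hn].
      2: { exfalso. apply (proj2_sig z0). exists U'. split; [exact oU'|]. split; [exact Uz0|].
           intros j Uj; apply hn; exists j; auto. }
      destruct (proj2 (HB (pts k)) U' oU' Uk) as [m hm].
      set (L := Cantor.to_nat (k, Cantor.to_nat (n, m))).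
      assert (e1 : Cantor.of_nat L = (k, Cantor.to_nat (n,m))) by apply Cantor.cancel_of_to.
      assert (e2 : Cantor.of_nat (Cantor.to_nat (n,m)) = (n,m)) by apply Cantor.cancel_of_to.
      assert (hk : kk L = k) by (unfold kk; rewrite e1; reflexivity).
      assert (hn' : nn L = n) by (unfold nn; rewrite e1; cbn [snd]; rewrite e2; reflexivity).
      assert (hm' : mm L = m) by (unfold mm; rewrite e1; cbn [snd]; rewrite e2; reflexivity).
      assert (kL : k <= L).
      { pose proof (Cantor.to_nat_non_decreasing k (Cantor.to_nat (n,m))). unfold L; lia. }
      destruct (sqs L) as [_ [hb hd]].
      rewrite hk, hm' in hb. rewrite hn' in hd.
      change (snd (sq L) k) with (f L k) in hb. rewrite (agree L k kL) in hb.
      change (snd (sq (S L)) (S L)) with (pts (S L)) in hb, hd.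
      exists (exist _ (pts (S L)) (Fpts (S L))). split.
      + apply (proj2 (hU' _)). simpl. apply hm. exact hb.
      + unfold DD; simpl. apply hd. exact (sqx (S L)). }
  destruct (BF DD HDD (fun z => V0 (proj1_sig z))) as [z [Vz Dz]].
  + exists V0; split; [exact hV0|]. intro; tauto.
  + exists (exist _ (pts 0) (Fpts 0)). simpl. unfold pts, f. rewrite sq0. exact hV0p.
  + exists (x, proj1_sig z). split.
    * apply hsub; simpl; [|exact Vz]. pose proof (sqx 0) as h0. rewrite sq0 in h0. exact h0.
    * intros n; exact (Dz n).
Qed.
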